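(* Let $b>0$, $c$ be constants and $m\ge1$ an integer, and let $\phi(s)=\frac{\sqrt{b^2-s^2}}{b}+\sqrt{b^2-s^2}\int_0^s\frac{c\,t^{2m}}{(b^2-t^2)^{3/2}}dt$. On $\mathbb{R}^2\setminus\{0\}$ let $$\alpha=e^{\sigma}\sqrt{(y^1)^2+(y^2)^2},\quad \beta=\frac{b\,e^{\sigma}(x^2y^1-x^1y^2)}{\sqrt{(x^1)^2+(x^2)^2}},\quad \sigma=\Big(m-\frac12\Big)\ln[(x^1)^2+(x^2)^2].$$ Then $F=\alpha\phi(\beta/\alpha)$ is projectively flat and $\beta$ is not closed.
   Context: For a Riemannian metric $\alpha$ and a 1-form $\beta$, $\beta$ is closed if $d\beta=0$. The spray coefficients of a Finsler metric $F$ are $G^i=\frac14 g^{il}\{[F^2]_{x^ky^l}y^k-[F^2]_{x^l}\}$ with $g_{ij}=\frac12[F^2]_{y^iy^j}$. $F$ is projectively flat on an open $U\subset\mathbb{R}^n$ if $G^i=P(x,y)y^i$ in the standard coordinates of $U$ for some function $P$. *)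

(* Defs.v *)
From Stdlib Require Import Reals Lra ClassicalEpsilon.
Open Scope R_scope.

(* Functions of the 4 coordinates (x^1, x^2, y^1, y^2) of T(R^2). *)
Definition fn4 := R -> R -> R -> R -> R.

(* Partial derivative with respect to coordinate i
   (0 = x^1, 1 = x^2, 2 = y^1, 3 = y^2), chosen via classical epsilon
   as the (unique when it exists) limit of the difference quotient. *)
Definition D (i : nat) (f : fn4) : fn4 := fun a b c d =>
  epsilon (inhabits 0)
    (fun l => derivable_pt_lim
       (fun t => match i with
                 | O => f t b c d
                 | 1%nat => f a t c d
                 | 2%nat => f a b t d
                 | _ => f a b c t end)
       (match i with O => a | 1%nat => b | 2%nat => c | _ => d end) l).

Definition integral (f : R -> R) (a b : R) : R :=
  epsilon (inhabits 0)
    (fun v => exists pr : Riemann_integrable f a b, RiemannInt pr = v).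

Definition gF (F : fn4) (i j : nat) : fn4 :=
  fun x1 x2 y1 y2 =>
    / 2 * D (2 + i) (D (2 + j) (fun a b c d => (F a b c d) ^ 2)) x1 x2 y1 y2.

Definition gFinv (F : fn4) (i j : nat) : fn4 :=
  fun x1 x2 y1 y2 =>
    let g00 := gF F 0 0 x1 x2 y1 y2 in
    let g01 := gF F 0 1 x1 x2 y1 y2 in
    let g10 := gF F 1 0 x1 x2 y1 y2 in
    let g11 := gF F 1 1 x1 x2 y1 y2 in
    let det := g00 * g11 - g01 * g10 in
    match i, j with
    | O, O => g11 / det
    | O, _ => - g01 / det
    | _, O => - g10 / det
    | _, _ => g00 / det
    end.

Definition sprayV (F : fn4) (l : nat) : fn4 :=
  fun x1 x2 y1 y2 =>
    let L := fun a b c d => (F a b c d) ^ 2 in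
    D 0 (D (2 + l) L) x1 x2 y1 y2 * y1
    + D 1 (D (2 + l) L) x1 x2 y1 y2 * y2
    - D l L x1 x2 y1 y2.

Definition spray (F : fn4) (i : nat) : fn4 :=
  fun x1 x2 y1 y2 =>
    / 4 * (gFinv F i 0 x1 x2 y1 y2 * sprayV F 0 x1 x2 y1 y2
           + gFinv F i 1 x1 x2 y1 y2 * sprayV F 1 x1 x2 y1 y2).

Definition projectively_flat (U : R -> R -> R -> R -> Prop) (F : fn4) : Prop :=
  exists P : fn4, forall x1 x2 y1 y2, U x1 x2 y1 y2 ->
    spray F 0 x1 x2 y1 y2 = P x1 x2 y1 y2 * y1 /\
    spray F 1 x1 x2 y1 y2 = P x1 x2 y1 y2 * y2.

(* A 1-form beta = b_1(x) y^1 + b_2(x) y^2 on R^2 \ {0} is closed iff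
   d beta = (d b_2/dx^1 - d b_1/dx^2) dx^1 /\ dx^2 = 0, with b_i = beta_{y^i}. *)
Definition closed_form (beta : fn4) : Prop :=
  forall x1 x2 y1 y2, (x1, x2) <> (0, 0) ->
    D 0 (D 3 beta) x1 x2 y1 y2 = D 1 (D 2 beta) x1 x2 y1 y2.

Definition phi (b c : R) (m : nat) (s : R) : R :=
  sqrt (b ^ 2 - s ^ 2) / b
  + sqrt (b ^ 2 - s ^ 2)
    * integral (fun t => c * t ^ (2 * m) / Rpower (b ^ 2 - t ^ 2) (3 / 2)) 0 s.

Definition sigma (m : nat) (x1 x2 : R) : R :=
  (INR m - / 2) * ln (x1 ^ 2 + x2 ^ 2).

Definition alpha (m : nat) : fn4 := fun x1 x2 y1 y2 =>
  exp (sigma m x1 x2) * sqrt (y1 ^ 2 + y2 ^ 2).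

Definition beta (b : R) (m : nat) : fn4 := fun x1 x2 y1 y2 =>
  b * exp (sigma m x1 x2) * (x2 * y1 - x1 * y2) / sqrt (x1 ^ 2 + x2 ^ 2).

Definition Fmetric (b c : R) (m : nat) : fn4 := fun x1 x2 y1 y2 =>
  alpha m x1 x2 y1 y2 * phi b c m (beta b m x1 x2 y1 y2 / alpha m x1 x2 y1 y2).

Definition domainF (b : R) (m : nat) (x1 x2 y1 y2 : R) : Prop :=
  (x1, x2) <> (0, 0) /\ (y1, y2) <> (0, 0) /\
  Rabs (beta b m x1 x2 y1 y2 / alpha m x1 x2 y1 y2) < b.

(* Main.v *)
Require Import Defs.
From Stdlib Require Import Reals Lra Lia Nsatz ClassicalEpsilon.
From Coquelicot Require Import Coquelicot.
Open Scope R_scope.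

Lemma locally_R (x : R) (Pr : R -> Prop) (d : R) : 0 < d ->
  (forall y, Rabs (y - x) < d -> Pr y) -> locally x Pr.
Proof.
  intros Hd H. exists (mkposreal d Hd). intros y Hy. apply H.
  exact Hy.
Qed.

Ltac elim_Derive :=
  repeat match goal with |- context [Derive ?f ?x] =>
    let H := fresh in
    assert (H : Derive f x = _) by (apply is_derive_unique; eassumption);
    rewrite H; clear H end.

Section Main.
Variables (b c : R) (m : nat).
Hypothesis hb : 0 < b.
Hypothesis hm : (1 <= m)%nat.

Definition sg (t : R) := sqrt (b*b - t*t).
Definition f2 (t : R) := c * t ^ (2*m) / ((b*b - t*t) * sg t).
Definition intg (t : R) := c * t ^ (2 * m) / Rpower (b ^ 2 - t ^ 2) (3 / 2).
Definition Iint (u : R) := integral intg 0 u.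
Definition KK (u : R) := 1 + b * Iint u.
Definition Kp (u : R) := b * f2 u.

Lemma sg_pos t : Rabs t < b -> 0 < b*b - t*t.
Proof.
  intros H. apply Rabs_def2 in H. nra.
Qed.

Lemma intg_f2 t : Rabs t < b -> intg t = f2 t.
Proof.
  intros H. pose proof (sg_pos t H) as Hp.
  unfold intg, f2, sg.
  replace (b^2 - t^2) with (b*b - t*t) by ring.
  replace (3/2) with (1 + /2) by field.
  rewrite Rpower_plus, Rpower_1, Rpower_sqrt by lra. reflexivity.
Qed.

Lemma f2_derive t : Rabs t < b -> ex_derive f2 t.
Proof.
  intros H. pose proof (sg_pos t H) as Hp.
  unfold f2, sg. auto_derive. pose proof (sqrt_lt_R0 _ Hp).
  replace (b*b + - (t*t)) with (b*b - t*t) by ring.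
  repeat split; try lra.
  apply Rgt_not_eq, Rmult_lt_0_compat; lra.
Qed.

Lemma ex_RInt_f2 u : Rabs u < b -> ex_RInt f2 0 u.
Proof.
  intros H. apply (@ex_RInt_continuous R_CompleteNormedModule). intros z Hz.
  apply (@ex_derive_continuous R_AbsRing R_NormedModule), f2_derive.
  apply Rabs_def2 in H. apply Rabs_def1.
  - assert (Rmax 0 u < b) by (apply Rmax_lub_lt; lra). lra.
  - assert (- b < Rmin 0 u) by (apply Rmin_glb_lt; lra). lra.
Qed.

Lemma Iint_RInt u : Rabs u < b -> Iint u = RInt f2 0 u.
Proof.
  intros H.
  assert (Hext : forall x, Rmin 0 u < x < Rmax 0 u -> f2 x = intg x).
  { intros x Hx. symmetry. apply intg_f2. apply Rabs_def2 in H. apply Rabs_def1.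
    - assert (Rmax 0 u < b) by (apply Rmax_lub_lt; lra). lra.
    - assert (- b < Rmin 0 u) by (apply Rmin_glb_lt; lra). lra. }
  assert (HI : ex_RInt intg 0 u) by (eapply ex_RInt_ext; [exact Hext| apply ex_RInt_f2; exact H]).
  pose proof (ex_RInt_Reals_0 _ _ _ HI) as pr.
  unfold Iint, integral.
  destruct (epsilon_spec (inhabits 0) (fun v => exists pr : Riemann_integrable intg 0 u, RiemannInt pr = v)
     (ex_intro _ (RiemannInt pr) (ex_intro _ pr eq_refl))) as [pr' Hpr'].
  rewrite <- Hpr', <- RInt_Reals. symmetry. apply RInt_ext. exact Hext.
Qed.

Lemma KK_derive u : Rabs u < b -> is_derive KK u (Kp u).
Proof.
  intros H.
  set (d := b - Rabs u).
  assert (Hd : 0 < d) by (unfold d; lra).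
  assert (Hloc : locally u (fun t => 1 + b * RInt f2 0 t = KK t)).
  { apply (locally_R _ _ d Hd). intros y Hy. unfold KK. rewrite Iint_RInt; auto.
    unfold d in Hy. pose proof (Rabs_triang_inv y u). pose proof (Rabs_triang (y - u) u).
    replace (y - u + u) with y in H1 by ring. lra. }
  eapply is_derive_ext_loc; [exact Hloc|].
  unfold Kp. auto_derive.
  - split; [apply ex_RInt_f2; exact H|]. split; [|exact I].
    apply (locally_R _ _ d Hd). intros y Hy.
    apply derivable_continuous_pt, ex_derive_Reals_0, f2_derive.
    unfold d in Hy. pose proof (Rabs_triang (y - u) u).
    replace (y - u + u) with y in H0 by ring. lra.
  - ring.
Qed.

Definition Kpp (u : R) := b * (c * (INR (2*m) * u ^ Init.Nat.pred (2*m)) / ((b*b - u*u) * sg u)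
  + c * u ^ (2*m) * (2*u * sg u + (b*b - u*u) * (u / sg u)) / (((b*b - u*u) * sg u) * ((b*b - u*u) * sg u))).

Lemma Kp_derive u : Rabs u < b -> is_derive Kp u (Kpp u).
Proof.
  intros H. pose proof (sg_pos u H) as Hp. pose proof (sqrt_lt_R0 _ Hp) as Hs.
  unfold Kp, Kpp, f2, sg. auto_derive.
  - replace (b*b + - (u*u)) with (b*b - u*u) by ring.
    repeat split; try lra.
    + apply Rgt_not_eq, Rmult_lt_0_compat; lra.
  - change (m + (m + 0))%nat with (2*m)%nat.
    replace (b*b + - (u*u)) with (b*b - u*u) by ring.
    field. split; lra.
Qed.

Lemma pow_2m u : u ^ (2*m) = u * u ^ Init.Nat.pred (2*m).
Proof.
  replace (2*m)%nat with (S (Init.Nat.pred (2*m))) at 1 by lia. reflexivity.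
Qed.

Lemma ode u : Rabs u < b ->
  u * Kpp u * (b*b - u*u) = Kp u * (2 * INR m * (b*b - u*u) + 3 * (u*u)).
Proof.
  intros H. pose proof (sg_pos u H) as Hp. pose proof (sqrt_lt_R0 _ Hp) as Hs.
  unfold Kpp, Kp, f2. rewrite pow_2m, mult_INR. simpl (INR 2).
  assert (HB : b*b - u*u = sg u * sg u) by (unfold sg; rewrite sqrt_sqrt; lra).
  fold (sg u) in Hs. rewrite HB. field. lra.
Qed.


Definition rh (x1 x2 : R) := sqrt (x1*x1 + x2*x2).
Definition ta (y1 y2 : R) := sqrt (y1*y1 + y2*y2).
Definition ee x1 x2 y1 y2 := b * / rh x1 x2 * / ta y1 y2.
Definition ss x1 x2 y1 y2 := ee x1 x2 y1 y2 * (x2*y1 - x1*y2).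
Definition PP (x1 x2 : R) := (x1*x1 + x2*x2) ^ (m - 1).
Definition nm := INR (m - 1).

Lemma rh_pos x1 x2 : 0 < x1*x1 + x2*x2 -> 0 < rh x1 x2.
Proof. intros; unfold rh; apply sqrt_lt_R0; lra. Qed.
Lemma ta_pos y1 y2 : 0 < y1*y1 + y2*y2 -> 0 < ta y1 y2.
Proof. intros; unfold ta; apply sqrt_lt_R0; lra. Qed.
Lemma rh_sq x1 x2 : 0 < x1*x1 + x2*x2 -> rh x1 x2 * rh x1 x2 = x1*x1 + x2*x2.
Proof. intros; unfold rh; apply sqrt_sqrt; lra. Qed.
Lemma ta_sq y1 y2 : 0 < y1*y1 + y2*y2 -> ta y1 y2 * ta y1 y2 = y1*y1 + y2*y2.
Proof. intros; unfold ta; apply sqrt_sqrt; lra. Qed.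

Lemma PP_derive x1 x2 v1 v2 : 0 < x1*x1 + x2*x2 ->
  is_derive (fun t => PP (x1 + t*v1) (x2 + t*v2)) 0
    (2 * nm * (x1*v1 + x2*v2) * PP x1 x2 * / rh x1 x2 * / rh x1 x2).
Proof.
  intros H. pose proof (rh_pos _ _ H). pose proof (rh_sq _ _ H).
  unfold PP, nm. auto_derive; [exact I|].
  rewrite !Rmult_0_l, !Rplus_0_r.
  assert (Hinv: / rh x1 x2 * / rh x1 x2 = / (x1*x1+x2*x2)) by (rewrite <- Rinv_mult, H1; reflexivity).
  rewrite (Rmult_assoc (2 * INR (m - 1) * (x1 * v1 + x2 * v2) * (x1 * x1 + x2 * x2) ^ (m - 1))), Hinv.
  destruct (m - 1)%nat as [|k].
  - simpl. ring.
  - simpl Init.Nat.pred. rewrite S_INR. simpl pow. field. lra.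
Qed.

Lemma ee_derive x1 x2 y1 y2 v1 v2 v3 v4 : 0 < x1*x1 + x2*x2 -> 0 < y1*y1 + y2*y2 ->
  is_derive (fun t => ee (x1 + t*v1) (x2 + t*v2) (y1 + t*v3) (y2 + t*v4)) 0
    (- ee x1 x2 y1 y2 * ((x1*v1 + x2*v2) * / rh x1 x2 * / rh x1 x2 + (y1*v3 + y2*v4) * / ta y1 y2 * / ta y1 y2)).
Proof.
  intros H H'. pose proof (rh_pos _ _ H). pose proof (ta_pos _ _ H').
  unfold ee, rh, ta in *. auto_derive.
  - rewrite !Rmult_0_l, !Rplus_0_r. repeat split; try lra.
  - rewrite !Rmult_0_l, !Rplus_0_r. field. lra.
Qed.

Lemma ss_derive x1 x2 y1 y2 v1 v2 v3 v4 : 0 < x1*x1 + x2*x2 -> 0 < y1*y1 + y2*y2 ->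
  is_derive (fun t => ss (x1 + t*v1) (x2 + t*v2) (y1 + t*v3) (y2 + t*v4)) 0
    (ee x1 x2 y1 y2 * (v2*y1 + x2*v3 - v1*y2 - x1*v4)
     - ss x1 x2 y1 y2 * (x1*v1 + x2*v2) * / rh x1 x2 * / rh x1 x2
     - ss x1 x2 y1 y2 * (y1*v3 + y2*v4) * / ta y1 y2 * / ta y1 y2).
Proof.
  intros H H'. pose proof (rh_pos _ _ H). pose proof (ta_pos _ _ H').
  unfold ss, ee, rh, ta in *. auto_derive.
  - rewrite !Rmult_0_l, !Rplus_0_r. repeat split; try lra.
  - rewrite !Rmult_0_l, !Rplus_0_r. field. lra.
Qed.

Lemma ita_derive y1 y2 v3 v4 : 0 < y1*y1 + y2*y2 ->
  is_derive (fun t => / ta (y1 + t*v3) (y2 + t*v4)) 0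
    (- (y1*v3 + y2*v4) * / ta y1 y2 * / ta y1 y2 * / ta y1 y2).
Proof.
  intros H'. pose proof (ta_pos _ _ H').
  unfold ta in *. auto_derive.
  - rewrite !Rmult_0_l, !Rplus_0_r. repeat split; try lra.
  - rewrite !Rmult_0_l, !Rplus_0_r. field. lra.
Qed.


Lemma chainG (Pf df sf Kf : R -> R) P0 d0 s0 aP ad as_ aK l :
  Pf 0 = P0 -> df 0 = d0 -> sf 0 = s0 ->
  is_derive Pf 0 aP -> is_derive df 0 ad -> is_derive sf 0 as_ -> is_derive Kf s0 aK ->
  l = aP * d0 * Kf s0 + P0 * ad * Kf s0 + P0 * d0 * aK * as_ ->
  is_derive (fun t => Pf t * df t * Kf (sf t)) 0 l.
Proof.
  intros E1 E2 E3 H1 H2 H3 H4 El. subst.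
  auto_derive.
  - repeat split; eexists; eassumption.
  - elim_Derive. ring.
Qed.


Lemma chainGy (Pf duf sf Kf df Kpf ef wuf yuf itf : R -> R)
  P0 du0 s0 d0 e0 wu0 yu0 it0 aP adu as_ aK ad aKp ae awu ayu ait l :
  Pf 0 = P0 -> duf 0 = du0 -> sf 0 = s0 -> df 0 = d0 -> ef 0 = e0 -> wuf 0 = wu0 ->
  yuf 0 = yu0 -> itf 0 = it0 ->
  is_derive Pf 0 aP -> is_derive duf 0 adu -> is_derive sf 0 as_ -> is_derive Kf s0 aK ->
  is_derive df 0 ad -> is_derive Kpf s0 aKp -> is_derive ef 0 ae -> is_derive wuf 0 awu ->
  is_derive yuf 0 ayu -> is_derive itf 0 ait ->
  l = aP * du0 * Kf s0 + P0 * adu * Kf s0 + P0 * du0 * aK * as_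
      + aP * d0 * Kpf s0 * (e0 * wu0 - s0 * yu0 * it0 * it0)
      + P0 * ad * Kpf s0 * (e0 * wu0 - s0 * yu0 * it0 * it0)
      + P0 * d0 * aKp * as_ * (e0 * wu0 - s0 * yu0 * it0 * it0)
      + P0 * d0 * Kpf s0 * (ae * wu0 + e0 * awu - as_ * yu0 * it0 * it0
            - s0 * ayu * it0 * it0 - s0 * yu0 * (ait * it0 + it0 * ait)) ->
  is_derive (fun t => Pf t * duf t * Kf (sf t)
     + Pf t * df t * Kpf (sf t) * (ef t * wuf t - sf t * yuf t * itf t * itf t)) 0 l.
Proof.
  intros E1 E2 E3 E4 E5 E6 E7 E8 H1 H2 H3 H4 H5 H6 H7 H8 H9 H10 El. subst.
  auto_derive.
  - repeat split; eexists; eassumption.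
  - elim_Derive. ring.
Qed.

Definition good x1 x2 y1 y2 := 0 < x1*x1 + x2*x2 /\ 0 < y1*y1 + y2*y2 /\ Rabs (ss x1 x2 y1 y2) < b.

Definition GG x1 x2 y1 y2 := PP x1 x2 * (x1*y1 + x2*y2) * KK (ss x1 x2 y1 y2).

Definition Gd x1 x2 y1 y2 v1 v2 v3 v4 :=
  let s := ss x1 x2 y1 y2 in
  (2 * nm * (x1*v1 + x2*v2) * PP x1 x2 * / rh x1 x2 * / rh x1 x2) * (x1*y1 + x2*y2) * KK s
  + PP x1 x2 * (v1*y1 + x1*v3 + (v2*y2 + x2*v4)) * KK s
  + PP x1 x2 * (x1*y1 + x2*y2) * Kp s *
    (ee x1 x2 y1 y2 * (v2*y1 + x2*v3 - v1*y2 - x1*v4)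
     - s * (x1*v1 + x2*v2) * / rh x1 x2 * / rh x1 x2
     - s * (y1*v3 + y2*v4) * / ta y1 y2 * / ta y1 y2).

Ltac z0 := cbv beta; rewrite ?Rmult_0_l, ?Rplus_0_r; reflexivity.

Lemma GG_derive x1 x2 y1 y2 v1 v2 v3 v4 : good x1 x2 y1 y2 ->
  is_derive (fun t => GG (x1 + t*v1) (x2 + t*v2) (y1 + t*v3) (y2 + t*v4)) 0
    (Gd x1 x2 y1 y2 v1 v2 v3 v4).
Proof.
  intros [H1 [H2 H3]]. unfold GG.
  eapply (chainG (fun t => PP (x1 + t*v1) (x2 + t*v2))
                (fun t => (x1 + t*v1) * (y1 + t*v3) + (x2 + t*v2) * (y2 + t*v4))
                (fun t => ss (x1 + t*v1) (x2 + t*v2) (y1 + t*v3) (y2 + t*v4)) KK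
                (PP x1 x2) (x1*y1 + x2*y2) (ss x1 x2 y1 y2)).
  - z0.
  - z0.
  - z0.
  - apply PP_derive; auto.
  - auto_derive; [exact I|reflexivity].
  - apply ss_derive; auto.
  - apply KK_derive; auto.
  - unfold Gd. ring.
Qed.


Definition Gy u3 u4 x1 x2 y1 y2 :=
  let s := ss x1 x2 y1 y2 in
  PP x1 x2 * (x1*u3 + x2*u4) * KK s
  + PP x1 x2 * (x1*y1 + x2*y2) * Kp s *
    (ee x1 x2 y1 y2 * (x2*u3 - x1*u4) - s * (y1*u3 + y2*u4) * / ta y1 y2 * / ta y1 y2).

Definition Gyd u3 u4 x1 x2 y1 y2 v1 v2 v3 v4 :=
  let s := ss x1 x2 y1 y2 in
  let P0 := PP x1 x2 in
  let aP := 2 * nm * (x1*v1 + x2*v2) * PP x1 x2 * / rh x1 x2 * / rh x1 x2 in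
  let du0 := x1*u3 + x2*u4 in
  let adu := v1*u3 + v2*u4 in
  let as_ := ee x1 x2 y1 y2 * (v2*y1 + x2*v3 - v1*y2 - x1*v4)
     - s * (x1*v1 + x2*v2) * / rh x1 x2 * / rh x1 x2
     - s * (y1*v3 + y2*v4) * / ta y1 y2 * / ta y1 y2 in
  let d0 := x1*y1 + x2*y2 in
  let ad := v1*y1 + x1*v3 + (v2*y2 + x2*v4) in
  let e0 := ee x1 x2 y1 y2 in
  let ae := - ee x1 x2 y1 y2 * ((x1*v1 + x2*v2) * / rh x1 x2 * / rh x1 x2 + (y1*v3 + y2*v4) * / ta y1 y2 * / ta y1 y2) in
  let wu0 := x2*u3 - x1*u4 in
  let awu := v2*u3 - v1*u4 in
  let yu0 := y1*u3 + y2*u4 in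
  let ayu := v3*u3 + v4*u4 in
  let it0 := / ta y1 y2 in
  let ait := - (y1*v3 + y2*v4) * / ta y1 y2 * / ta y1 y2 * / ta y1 y2 in
  aP * du0 * KK s + P0 * adu * KK s + P0 * du0 * Kp s * as_
      + aP * d0 * Kp s * (e0 * wu0 - s * yu0 * it0 * it0)
      + P0 * ad * Kp s * (e0 * wu0 - s * yu0 * it0 * it0)
      + P0 * d0 * Kpp s * as_ * (e0 * wu0 - s * yu0 * it0 * it0)
      + P0 * d0 * Kp s * (ae * wu0 + e0 * awu - as_ * yu0 * it0 * it0
            - s * ayu * it0 * it0 - s * yu0 * (ait * it0 + it0 * ait)).

Lemma Gy_derive u3 u4 x1 x2 y1 y2 v1 v2 v3 v4 : good x1 x2 y1 y2 ->
  is_derive (fun t => Gy u3 u4 (x1 + t*v1) (x2 + t*v2) (y1 + t*v3) (y2 + t*v4)) 0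
    (Gyd u3 u4 x1 x2 y1 y2 v1 v2 v3 v4).
Proof.
  intros [H1 [H2 H3]]. unfold Gy.
  eapply (chainGy (fun t => PP (x1 + t*v1) (x2 + t*v2))
                (fun t => (x1 + t*v1) * u3 + (x2 + t*v2) * u4)
                (fun t => ss (x1 + t*v1) (x2 + t*v2) (y1 + t*v3) (y2 + t*v4)) KK
                (fun t => (x1 + t*v1) * (y1 + t*v3) + (x2 + t*v2) * (y2 + t*v4))
                Kp
                (fun t => ee (x1 + t*v1) (x2 + t*v2) (y1 + t*v3) (y2 + t*v4))
                (fun t => (x2 + t*v2) * u3 - (x1 + t*v1) * u4)
                (fun t => (y1 + t*v3) * u3 + (y2 + t*v4) * u4)
                (fun t => / ta (y1 + t*v3) (y2 + t*v4))
                (PP x1 x2) (x1*u3 + x2*u4) (ss x1 x2 y1 y2) (x1*y1 + x2*y2)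
                (ee x1 x2 y1 y2) (x2*u3 - x1*u4) (y1*u3 + y2*u4) (/ ta y1 y2)).
  all: try z0.
  - apply PP_derive; auto.
  - auto_derive; [exact I|reflexivity].
  - apply ss_derive; auto.
  - apply KK_derive; auto.
  - auto_derive; [exact I|reflexivity].
  - apply Kp_derive; auto.
  - apply ee_derive; auto.
  - auto_derive; [exact I|reflexivity].
  - auto_derive; [exact I|reflexivity].
  - apply ita_derive; auto.
  - unfold Gyd. ring.
Qed.


Lemma INR_m : INR m = nm + 1.
Proof. unfold nm. rewrite <- S_INR. f_equal. lia. Qed.

Lemma alg_facts x1 x2 y1 y2 : good x1 x2 y1 y2 ->
  rh x1 x2 * rh x1 x2 = x1*x1 + x2*x2 /\ ta y1 y2 * ta y1 y2 = y1*y1 + y2*y2 /\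
  rh x1 x2 * / rh x1 x2 = 1 /\ ta y1 y2 * / ta y1 y2 = 1 /\
  ss x1 x2 y1 y2 * Kpp (ss x1 x2 y1 y2) * (b*b - ss x1 x2 y1 y2 * ss x1 x2 y1 y2) =
   Kp (ss x1 x2 y1 y2) * (2 * INR m * (b*b - ss x1 x2 y1 y2 * ss x1 x2 y1 y2) + 3 * (ss x1 x2 y1 y2 * ss x1 x2 y1 y2)).
Proof.
  intros [H1 [H2 H3]].
  pose proof (rh_pos _ _ H1). pose proof (ta_pos _ _ H2).
  repeat split.
  - apply rh_sq; auto.
  - apply ta_sq; auto.
  - field; lra.
  - field; lra.
  - apply ode; auto.
Qed.

Ltac prep_alg x1 x2 y1 y2 :=
  match goal with Hg : good x1 x2 y1 y2 |- _ =>
    destruct (alg_facts _ _ _ _ Hg) as [? [? [? [? ?]]]]; pose proof INR_m end.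

Lemma hamel0 x1 x2 y1 y2 : good x1 x2 y1 y2 ->
  Gyd 1 0 x1 x2 y1 y2 1 0 0 0 * y1 + Gyd 1 0 x1 x2 y1 y2 0 1 0 0 * y2 = Gd x1 x2 y1 y2 1 0 0 0.
Proof.
  intros Hg. prep_alg x1 x2 y1 y2.
  unfold Gyd, Gd, ss, ee in *. nsatz.
Qed.


Lemma hamel1 x1 x2 y1 y2 : good x1 x2 y1 y2 ->
  Gyd 0 1 x1 x2 y1 y2 1 0 0 0 * y1 + Gyd 0 1 x1 x2 y1 y2 0 1 0 0 * y2 = Gd x1 x2 y1 y2 0 1 0 0.
Proof.
  intros Hg. prep_alg x1 x2 y1 y2.
  unfold Gyd, Gd, ss, ee in *. nsatz.
Qed.

Lemma euler1 x1 x2 y1 y2 : good x1 x2 y1 y2 ->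
  Gy 1 0 x1 x2 y1 y2 * y1 + Gy 0 1 x1 x2 y1 y2 * y2 = GG x1 x2 y1 y2.
Proof.
  intros Hg. prep_alg x1 x2 y1 y2.
  unfold Gy, GG, ss, ee in *. nsatz.
Qed.

Lemma euler2a x1 x2 y1 y2 : good x1 x2 y1 y2 ->
  Gyd 1 0 x1 x2 y1 y2 0 0 1 0 * y1 + Gyd 0 1 x1 x2 y1 y2 0 0 1 0 * y2 = 0.
Proof.
  intros Hg. prep_alg x1 x2 y1 y2.
  unfold Gyd, ss, ee in *. nsatz.
Qed.

Lemma euler2b x1 x2 y1 y2 : good x1 x2 y1 y2 ->
  Gyd 1 0 x1 x2 y1 y2 0 0 0 1 * y1 + Gyd 0 1 x1 x2 y1 y2 0 0 0 1 * y2 = 0.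
Proof.
  intros Hg. prep_alg x1 x2 y1 y2.
  unfold Gyd, ss, ee in *. nsatz.
Qed.



Definition uv (i j : nat) : R := if Nat.eqb i j then 1 else 0.

Lemma shift_derive (g : R -> R) (h : R -> R) a l :
  (forall t, h t = g (t - a)) -> is_derive g 0 l -> derivable_pt_lim h a l.
Proof.
  intros Hh Hg. apply is_derive_Reals.
  eapply is_derive_ext. { intros t. symmetry. apply Hh. }
  replace l with (scal 1 l) by (unfold scal; simpl; unfold mult; simpl; ring).
  apply (is_derive_comp g (fun t => t - a) a l 1).
  - replace (a - a) with 0 by ring. exact Hg.
  - auto_derive; [exact I| reflexivity].
Qed.

Lemma D_unique i f x1 x2 y1 y2 l :
  derivable_pt_lim
       (fun t => match i with
                 | O => f t x2 y1 y2
                 | 1%nat => f x1 t y1 y2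
                 | 2%nat => f x1 x2 t y2
                 | _ => f x1 x2 y1 t end)
       (match i with O => x1 | 1%nat => x2 | 2%nat => y1 | _ => y2 end) l ->
  Defs.D i f x1 x2 y1 y2 = l.
Proof.
  intros H. unfold Defs.D.
  pose proof (epsilon_spec (inhabits 0) _ (ex_intro _ l H)) as Hs.
  eapply uniqueness_limite; [exact Hs | exact H].
Qed.

Lemma D_is (i : nat) (f : fn4) x1 x2 y1 y2 l : (i <= 3)%nat ->
  is_derive (fun t => f (x1 + t * uv i 0) (x2 + t * uv i 1) (y1 + t * uv i 2) (y2 + t * uv i 3)) 0 l ->
  Defs.D i f x1 x2 y1 y2 = l.
Proof.
  intros Hi H. apply D_unique.
  destruct i as [|[|[|[|i]]]]; unfold uv in H; simpl in H.
  - eapply shift_derive; [|exact H]. intros t. simpl. f_equal; ring.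
  - eapply shift_derive; [|exact H]. intros t. simpl. f_equal; ring.
  - eapply shift_derive; [|exact H]. intros t. simpl. f_equal; ring.
  - eapply shift_derive; [|exact H]. intros t. simpl. f_equal; ring.
  - lia.
Qed.


Lemma expsig x1 x2 : 0 < x1*x1 + x2*x2 ->
  exp (Defs.sigma m x1 x2) = PP x1 x2 * rh x1 x2.
Proof.
  intros H. unfold Defs.sigma, PP, rh.
  replace (x1 ^ 2 + x2 ^ 2) with (x1*x1 + x2*x2) by ring.
  rewrite INR_m. unfold nm.
  replace ((INR (m - 1) + 1 - / 2) * ln (x1 * x1 + x2 * x2))
    with (INR (m - 1) * ln (x1 * x1 + x2 * x2) + / 2 * ln (x1 * x1 + x2 * x2)) by field.
  rewrite exp_plus.
  change (exp (INR (m - 1) * ln (x1 * x1 + x2 * x2))) with (Rpower (x1*x1+x2*x2) (INR (m-1))).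
  change (exp (/2 * ln (x1 * x1 + x2 * x2))) with (Rpower (x1*x1+x2*x2) (/2)).
  rewrite Rpower_pow, Rpower_sqrt by lra. reflexivity.
Qed.

Lemma ratio_eq x1 x2 y1 y2 : 0 < x1*x1 + x2*x2 -> 0 < y1*y1 + y2*y2 ->
  Defs.beta b m x1 x2 y1 y2 / Defs.alpha m x1 x2 y1 y2 = ss x1 x2 y1 y2.
Proof.
  intros H1 H2. pose proof (rh_pos _ _ H1). pose proof (ta_pos _ _ H2).
  unfold Defs.beta, Defs.alpha, ss, ee.
  rewrite expsig by auto.
  replace (sqrt (x1 ^ 2 + x2 ^ 2)) with (rh x1 x2) by (unfold rh; f_equal; ring).
  replace (sqrt (y1 ^ 2 + y2 ^ 2)) with (ta y1 y2) by (unfold ta; f_equal; ring).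
  assert (0 < PP x1 x2) by (unfold PP; apply pow_lt; lra).
  field. repeat split; lra.
Qed.

Lemma sqrt_part x1 x2 y1 y2 : 0 < x1*x1 + x2*x2 -> 0 < y1*y1 + y2*y2 ->
  sqrt (b ^ 2 - ss x1 x2 y1 y2 ^ 2) = b * Rabs (x1*y1 + x2*y2) * / rh x1 x2 * / ta y1 y2.
Proof.
  intros H1 H2. pose proof (rh_pos _ _ H1). pose proof (ta_pos _ _ H2).
  pose proof (rh_sq _ _ H1). pose proof (ta_sq _ _ H2).
  assert (Hi1 : rh x1 x2 * / rh x1 x2 = 1) by (field; lra).
  assert (Hi2 : ta y1 y2 * / ta y1 y2 = 1) by (field; lra).
  assert (E : b ^ 2 - ss x1 x2 y1 y2 ^ 2 = (b * (x1*y1 + x2*y2) * / rh x1 x2 * / ta y1 y2) ^ 2).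
  { assert (HL : rh x1 x2 * rh x1 x2 * (ta y1 y2 * ta y1 y2) = (x2*y1 - x1*y2)^2 + (x1*y1+x2*y2)^2) by (rewrite H3, H4; ring).
    unfold ss, ee.
    replace ((b * / rh x1 x2 * / ta y1 y2 * (x2*y1 - x1*y2)) ^ 2)
      with ((b * / rh x1 x2 * / ta y1 y2)^2 * (x2*y1 - x1*y2)^2) by ring.
    replace ((x2*y1 - x1*y2)^2) with (rh x1 x2 * rh x1 x2 * (ta y1 y2 * ta y1 y2) - (x1*y1+x2*y2)^2)
      by (rewrite HL; ring).
    replace (b^2) with (b^2 * (rh x1 x2 * / rh x1 x2)^2 * (ta y1 y2 * / ta y1 y2)^2) at 1
      by (rewrite Hi1, Hi2; ring).
    ring. }
  rewrite E.
  replace ((b * (x1*y1 + x2*y2) * / rh x1 x2 * / ta y1 y2) ^ 2)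
    with (Rsqr (b * (x1*y1 + x2*y2) * / rh x1 x2 * / ta y1 y2)) by (unfold Rsqr; ring).
  rewrite sqrt_Rsqr_abs, !Rabs_mult.
  rewrite (Rabs_pos_eq b), (Rabs_pos_eq (/ rh x1 x2)), (Rabs_pos_eq (/ ta y1 y2)); try lra;
  left; apply Rinv_0_lt_compat; lra.
Qed.

Lemma Fmetric_eq x1 x2 y1 y2 : 0 < x1*x1 + x2*x2 -> 0 < y1*y1 + y2*y2 ->
  Fmetric b c m x1 x2 y1 y2 = PP x1 x2 * Rabs (x1*y1 + x2*y2) * KK (ss x1 x2 y1 y2).
Proof.
  intros H1 H2. pose proof (rh_pos _ _ H1). pose proof (ta_pos _ _ H2).
  unfold Fmetric. rewrite ratio_eq by auto. unfold Defs.phi.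
  rewrite sqrt_part by auto.
  change (integral (fun t : R => c * t ^ (2 * m) / Rpower (b ^ 2 - t ^ 2) (3 / 2)) 0 (ss x1 x2 y1 y2))
    with (Iint (ss x1 x2 y1 y2)).
  unfold Defs.alpha. rewrite expsig by auto.
  replace (sqrt (y1 ^ 2 + y2 ^ 2)) with (ta y1 y2) by (unfold ta; f_equal; ring).
  unfold KK. field. repeat split; lra.
Qed.

Lemma L_eq x1 x2 y1 y2 : 0 < x1*x1 + x2*x2 -> 0 < y1*y1 + y2*y2 ->
  Fmetric b c m x1 x2 y1 y2 ^ 2 = GG x1 x2 y1 y2 ^ 2.
Proof.
  intros H1 H2. rewrite Fmetric_eq by auto. unfold GG.
  rewrite !Rpow_mult_distr, pow2_abs. reflexivity.
Qed.

Lemma pos_of_d x1 x2 y1 y2 : x1*y1 + x2*y2 <> 0 ->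
  0 < x1*x1 + x2*x2 /\ 0 < y1*y1 + y2*y2.
Proof.
  intros H. split.
  - destruct (Rle_lt_dec (x1*x1 + x2*x2) 0) as [Hle|Hlt]; [|exact Hlt].
    exfalso. apply H. assert (x1 = 0) by nra. assert (x2 = 0) by nra. subst. ring.
  - destruct (Rle_lt_dec (y1*y1 + y2*y2) 0) as [Hle|Hlt]; [|exact Hlt].
    exfalso. apply H. assert (y1 = 0) by nra. assert (y2 = 0) by nra. subst. ring.
Qed.

Lemma good_of_d x1 x2 y1 y2 : x1*y1 + x2*y2 <> 0 -> good x1 x2 y1 y2.
Proof.
  intros H. destruct (pos_of_d _ _ _ _ H) as [H1 H2].
  pose proof (rh_pos _ _ H1). pose proof (ta_pos _ _ H2).
  pose proof (rh_sq _ _ H1) as H3r. pose proof (ta_sq _ _ H2) as H4t.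
  split; [exact H1|]. split; [exact H2|].
  assert (Hs : ss x1 x2 y1 y2 * ss x1 x2 y1 y2 * (rh x1 x2 * rh x1 x2 * (ta y1 y2 * ta y1 y2))
                = b * b * ((x2*y1 - x1*y2) * (x2*y1 - x1*y2))).
  { unfold ss, ee. field. split; lra. }
  rewrite H3r, H4t in Hs.
  assert (Hd : 0 < (x1*y1 + x2*y2) * (x1*y1 + x2*y2)).
  { apply Rsqr_pos_lt in H. unfold Rsqr in H. exact H. }
  assert (Hp : 0 < (x1*x1 + x2*x2) * (y1*y1 + y2*y2)) by (apply Rmult_lt_0_compat; auto).
  assert (Hlt : ss x1 x2 y1 y2 * ss x1 x2 y1 y2 < b * b).
  { apply (Rmult_lt_reg_r ((x1*x1 + x2*x2) * (y1*y1 + y2*y2))); [exact Hp|].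
    rewrite Hs.
    assert (E : (x1*x1+x2*x2)*(y1*y1+y2*y2) = (x2*y1-x1*y2)*(x2*y1-x1*y2) + (x1*y1+x2*y2)*(x1*y1+x2*y2)) by ring.
    rewrite E. assert (0 < b*b) by nra. apply Rmult_lt_compat_l; lra. }
  apply Rabs_def1; nra.
Qed.

Lemma aff_loc d0 a : d0 <> 0 -> locally 0 (fun t => d0 + t * a <> 0).
Proof.
  intros H. apply (locally_R _ _ (Rabs d0 / (Rabs a + 1))).
  - apply Rdiv_lt_0_compat; [apply Rabs_pos_lt; auto| pose proof (Rabs_pos a); lra].
  - intros t Ht E. rewrite Rminus_0_r in Ht.
    assert (Ha : 0 < Rabs a + 1) by (pose proof (Rabs_pos a); lra).
    assert (Rabs t * (Rabs a + 1) < Rabs d0).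
    { apply (Rmult_lt_compat_r (Rabs a + 1)) in Ht; [|lra].
      unfold Rdiv in Ht. rewrite Rmult_assoc, Rinv_l in Ht by lra. lra. }
    assert (d0 = - (t * a)) by lra.
    assert (Rabs d0 = Rabs t * Rabs a) by (rewrite H1, Rabs_Ropp, Rabs_mult; reflexivity).
    pose proof (Rabs_pos t). nra.
Qed.

Definition dline x1 x2 y1 y2 i t :=
  (x1 + t * uv i 0) * (y1 + t * uv i 2) + (x2 + t * uv i 1) * (y2 + t * uv i 3).

Lemma line_loc i x1 x2 y1 y2 : (i <= 3)%nat -> x1*y1 + x2*y2 <> 0 ->
  locally 0 (fun t => dline x1 x2 y1 y2 i t <> 0).
Proof.
  intros Hi H. unfold dline.
  destruct i as [|[|[|[|i]]]]; unfold uv; simpl.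
  - generalize (aff_loc _ y1 H). apply filter_imp. intros t Ht E. apply Ht. rewrite <- E. ring.
  - generalize (aff_loc _ y2 H). apply filter_imp. intros t Ht E. apply Ht. rewrite <- E. ring.
  - generalize (aff_loc _ x1 H). apply filter_imp. intros t Ht E. apply Ht. rewrite <- E. ring.
  - generalize (aff_loc _ x2 H). apply filter_imp. intros t Ht E. apply Ht. rewrite <- E. ring.
  - lia.
Qed.

Lemma sq_derive (f : R -> R) a : is_derive f 0 a -> is_derive (fun t => f t ^ 2) 0 (2 * f 0 * a).
Proof.
  intros H. auto_derive.
  - repeat split; eexists; eassumption.
  - elim_Derive. simpl. ring.
Qed.

Lemma prod_derive (f g : R -> R) a a' : is_derive f 0 a -> is_derive g 0 a' ->
  is_derive (fun t => 2 * f t * g t) 0 (2 * (a * g 0 + f 0 * a')).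
Proof.
  intros H H'. auto_derive.
  - repeat split; eexists; eassumption.
  - elim_Derive. ring.
Qed.

Definition LL : fn4 := fun a b0 c0 d0 => Fmetric b c m a b0 c0 d0 ^ 2.

Lemma D1_L i x1 x2 y1 y2 : (i <= 3)%nat -> x1*y1 + x2*y2 <> 0 ->
  Defs.D i LL x1 x2 y1 y2 = 2 * GG x1 x2 y1 y2 * Gd x1 x2 y1 y2 (uv i 0) (uv i 1) (uv i 2) (uv i 3).
Proof.
  intros Hi H. apply D_is; [exact Hi|].
  eapply is_derive_ext_loc.
  2:{ pose proof (sq_derive _ _ (GG_derive x1 x2 y1 y2 (uv i 0) (uv i 1) (uv i 2) (uv i 3) (good_of_d _ _ _ _ H))) as Hd.
      cbv beta in Hd. rewrite !Rmult_0_l, !Rplus_0_r in Hd. exact Hd. }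
  generalize (line_loc i x1 x2 y1 y2 Hi H). apply filter_imp. intros t Ht.
  unfold dline in Ht. destruct (pos_of_d _ _ _ _ Ht).
  unfold LL. symmetry. apply L_eq; auto.
Qed.


Lemma Gd_y x1 x2 y1 y2 u3 u4 : Gd x1 x2 y1 y2 0 0 u3 u4 = Gy u3 u4 x1 x2 y1 y2.
Proof. unfold Gd, Gy. ring. Qed.

Lemma uv_y j : (j <= 1)%nat -> uv (2 + j) 0 = 0 /\ uv (2 + j) 1 = 0.
Proof. intros. destruct j as [|[|j]]; unfold uv; simpl; try lia; split; reflexivity. Qed.

Lemma D2_L k j x1 x2 y1 y2 : (k <= 3)%nat -> (j <= 1)%nat -> x1*y1 + x2*y2 <> 0 ->
  Defs.D k (Defs.D (2 + j) LL) x1 x2 y1 y2 =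
  2 * (Gd x1 x2 y1 y2 (uv k 0) (uv k 1) (uv k 2) (uv k 3) * Gy (uv (2+j) 2) (uv (2+j) 3) x1 x2 y1 y2
       + GG x1 x2 y1 y2 * Gyd (uv (2+j) 2) (uv (2+j) 3) x1 x2 y1 y2 (uv k 0) (uv k 1) (uv k 2) (uv k 3)).
Proof.
  intros Hk Hj H. apply D_is; [exact Hk|].
  eapply is_derive_ext_loc.
  2:{ pose proof (prod_derive _ _ _ _
        (GG_derive x1 x2 y1 y2 (uv k 0) (uv k 1) (uv k 2) (uv k 3) (good_of_d _ _ _ _ H))
        (Gy_derive (uv (2+j) 2) (uv (2+j) 3) x1 x2 y1 y2 (uv k 0) (uv k 1) (uv k 2) (uv k 3) (good_of_d _ _ _ _ H))) as Hd.
      cbv beta in Hd. rewrite !Rmult_0_l, !Rplus_0_r in Hd. exact Hd. }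
  generalize (line_loc k x1 x2 y1 y2 Hk H). apply filter_imp. intros t Ht.
  unfold dline in Ht. symmetry.
  rewrite D1_L by (auto; lia).
  destruct (uv_y j Hj) as [E0 E1]. rewrite E0, E1, Gd_y. reflexivity.
Qed.


Lemma spray_par x1 x2 y1 y2 : x1*y1 + x2*y2 <> 0 ->
  spray (Fmetric b c m) 0 x1 x2 y1 y2 * y2 = spray (Fmetric b c m) 1 x1 x2 y1 y2 * y1.
Proof.
  intros H. pose proof (good_of_d _ _ _ _ H) as Hg.
  pose proof (hamel0 _ _ _ _ Hg). pose proof (hamel1 _ _ _ _ Hg).
  pose proof (euler1 _ _ _ _ Hg). pose proof (euler2a _ _ _ _ Hg). pose proof (euler2b _ _ _ _ Hg).
  unfold spray, gFinv, gF, sprayV. cbv zeta.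
  change (fun a b0 c0 d0 => Fmetric b c m a b0 c0 d0 ^ 2) with LL.
  rewrite (D2_L 0 0), (D2_L 1 0), (D2_L 0 1), (D2_L 1 1), (D2_L (2+0) 0), (D2_L (2+0) 1),
    (D2_L (2+1) 0), (D2_L (2+1) 1), (D1_L 0), (D1_L 1) by (auto; lia).
  cbv [uv Nat.eqb Nat.add].
  rewrite !Gd_y.
  unfold Rdiv. nsatz.
Qed.


Lemma beta_eq x1 x2 y1 y2 : 0 < x1*x1 + x2*x2 ->
  Defs.beta b m x1 x2 y1 y2 = b * PP x1 x2 * (x2*y1 - x1*y2).
Proof.
  intros H. pose proof (rh_pos _ _ H). unfold Defs.beta. rewrite expsig by auto.
  replace (sqrt (x1 ^ 2 + x2 ^ 2)) with (rh x1 x2) by (unfold rh; f_equal; ring).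
  field. lra.
Qed.

Lemma D3beta x1 x2 y1 y2 : 0 < x1*x1 + x2*x2 ->
  Defs.D 3 (Defs.beta b m) x1 x2 y1 y2 = - b * PP x1 x2 * x1.
Proof.
  intros H. apply D_is; [lia|]. cbv [uv Nat.eqb].
  apply (is_derive_ext (fun t => b * PP x1 x2 * (x2*(y1 + t*0) - x1*(y2 + t*1)))).
  { intros t. rewrite !Rmult_0_r, !Rplus_0_r. rewrite beta_eq by auto. reflexivity. }
  auto_derive; [exact I|ring].
Qed.

Lemma D2beta x1 x2 y1 y2 : 0 < x1*x1 + x2*x2 ->
  Defs.D 2 (Defs.beta b m) x1 x2 y1 y2 = b * PP x1 x2 * x2.
Proof.
  intros H. apply D_is; [lia|]. cbv [uv Nat.eqb].
  apply (is_derive_ext (fun t => b * PP x1 x2 * (x2*(y1 + t*1) - x1*(y2 + t*0)))).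
  { intros t. rewrite !Rmult_0_r, !Rplus_0_r. rewrite beta_eq by auto. reflexivity. }
  auto_derive; [exact I|ring].
Qed.

Lemma DD03 : Defs.D 0 (Defs.D 3 (Defs.beta b m)) 1 0 0 0 = - b * (2 * nm + 1).
Proof.
  apply D_is; [lia|]. cbv [uv Nat.eqb].
  eapply is_derive_ext_loc.
  2:{ assert (Hd : is_derive (fun t => - b * PP (1 + t * 1) (0 + t * 0) * (1 + t * 1)) 0 (- b * (2 * nm + 1))).
      { unfold PP, nm. auto_derive; [exact I|].
        replace ((1 + 0 * 1) * (1 + 0 * 1) + (0 + 0 * 0) * (0 + 0 * 0)) with 1 by ring.
        rewrite !pow1. ring. }
      exact Hd. }
  generalize (aff_loc 1 1 ltac:(lra)). apply filter_imp. intros t Ht.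
  rewrite D3beta. reflexivity.
  assert (0 < (1 + t*1) * (1 + t*1)) by (apply Rsqr_pos_lt in Ht; exact Ht). nra.
Qed.

Lemma DD12 : Defs.D 1 (Defs.D 2 (Defs.beta b m)) 1 0 0 0 = b.
Proof.
  apply D_is; [lia|]. cbv [uv Nat.eqb].
  apply (is_derive_ext (fun t => b * PP (1 + t*0) (0 + t*1) * (0 + t*1))).
  { intros t. rewrite D2beta. reflexivity. nra. }
  unfold PP. auto_derive; [exact I|].
  replace ((1 + 0 * 0) * (1 + 0 * 0) + (0 + 0 * 1) * (0 + 0 * 1)) with 1 by ring.
  rewrite !pow1. ring.
Qed.

Lemma not_closed : ~ closed_form (Defs.beta b m).
Proof.
  intros Hc. specialize (Hc 1 0 0 0).
  assert (Hne : (1, 0) <> (0, 0)) by (intro E; inversion E; lra).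
  specialize (Hc Hne). rewrite DD03, DD12 in Hc.
  pose proof (pos_INR (m - 1)). unfold nm in Hc. nra.
Qed.


Lemma ss_sq x1 x2 y1 y2 : 0 < x1*x1 + x2*x2 -> 0 < y1*y1 + y2*y2 ->
  ss x1 x2 y1 y2 * ss x1 x2 y1 y2 * ((x1*x1 + x2*x2) * (y1*y1 + y2*y2))
                = b * b * ((x2*y1 - x1*y2) * (x2*y1 - x1*y2)).
Proof.
  intros H1 H2.
  pose proof (rh_pos _ _ H1). pose proof (ta_pos _ _ H2).
  rewrite <- (rh_sq _ _ H1), <- (ta_sq _ _ H2).
  unfold ss, ee. field. split; lra.
Qed.

Lemma dom_d x1 x2 y1 y2 : domainF b m x1 x2 y1 y2 -> x1*y1 + x2*y2 <> 0.
Proof.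
  intros [Hx [Hy Hr]].
  assert (H1 : 0 < x1*x1 + x2*x2).
  { destruct (Rle_lt_dec (x1*x1 + x2*x2) 0) as [Hle|Hlt]; [|exact Hlt].
    exfalso. apply Hx. assert (x1 = 0) by nra. assert (x2 = 0) by nra. subst. reflexivity. }
  assert (H2 : 0 < y1*y1 + y2*y2).
  { destruct (Rle_lt_dec (y1*y1 + y2*y2) 0) as [Hle|Hlt]; [|exact Hlt].
    exfalso. apply Hy. assert (y1 = 0) by nra. assert (y2 = 0) by nra. subst. reflexivity. }
  rewrite ratio_eq in Hr by auto.
  intro Hd. pose proof (ss_sq _ _ _ _ H1 H2) as Hs.
  assert (E : (x1*x1+x2*x2)*(y1*y1+y2*y2) = (x2*y1-x1*y2)*(x2*y1-x1*y2) + (x1*y1+x2*y2)*(x1*y1+x2*y2)) by ring.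
  rewrite Hd in E. rewrite Rmult_0_l, Rplus_0_r in E. rewrite <- E in Hs.
  assert (Hp : 0 < (x1*x1 + x2*x2) * (y1*y1 + y2*y2)) by (apply Rmult_lt_0_compat; auto).
  assert (Hss : ss x1 x2 y1 y2 * ss x1 x2 y1 y2 = b * b).
  { apply (Rmult_eq_reg_r ((x1*x1 + x2*x2) * (y1*y1 + y2*y2))); [exact Hs|lra]. }
  assert (Rabs (ss x1 x2 y1 y2) * Rabs (ss x1 x2 y1 y2) = b * b).
  { rewrite <- Rabs_mult, Hss. apply Rabs_pos_eq. nra. }
  pose proof (Rabs_pos (ss x1 x2 y1 y2)). nra.
Qed.

Lemma flat : projectively_flat (domainF b m) (Fmetric b c m).
Proof.
  exists (fun x1 x2 y1 y2 => if Req_EM_T y1 0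
           then spray (Fmetric b c m) 1 x1 x2 y1 y2 / y2
           else spray (Fmetric b c m) 0 x1 x2 y1 y2 / y1).
  intros x1 x2 y1 y2 Hdom.
  pose proof (dom_d _ _ _ _ Hdom) as Hd.
  pose proof (spray_par _ _ _ _ Hd) as Hp.
  destruct Hdom as [_ [Hy _]].
  destruct (Req_EM_T y1 0) as [E|E].
  - subst y1. assert (y2 <> 0) by (intro; subst; apply Hy; reflexivity).
    rewrite Rmult_0_r in Hp. split.
    + rewrite Rmult_0_r. apply (Rmult_eq_reg_r y2); [lra|auto]. 
    + field. auto.
  - split.
    + field. auto.
    + apply (Rmult_eq_reg_r y1); [|auto]. rewrite <- Hp. field. auto.
Qed.

End Main.

Theorem mainTheorem12 (b c : R) (m : nat) (hb : 0 < b) (hm : (1 <= m)%nat) :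
  Defs.projectively_flat (Defs.domainF b m) (Defs.Fmetric b c m) /\ ~ Defs.closed_form (Defs.beta b m).
Proof.
  split.
  - apply flat; assumption.
  - apply not_closed; assumption.
Qed.
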